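(* Let $(G,S)$ be a Cayley graph of a group of polynomial volume growth with homogeneous dimension $D$. Then for every (small) $\theta>0$ there exists $R_0(\theta,S)$ such that $$\frac{|B_p(R)|}{|B_p(r)|}\leq(1+\theta)\left(\frac{R}{r}\right)^D$$ for all $p\in G$ and all real $R\geq r\geq R_0(\theta,S)$.
   Context: For a group $G$ with finite symmetric generating set $S$, the Cayley graph has $x\sim y$ iff $x=ys$ for some $s\in S$, with word metric $d^S$ (shortest path length). $B_p(t)=\{x\in G: d^S(x,p)\leq t\}$ for real $t\ge0$, and $|B_p(t)|$ is its cardinality. $G$ has polynomial volume growth if $|B_e(n)|\leq Cn^A$ for some $C,A>0$ and all $n\geq1$. The homogeneous dimension is the integer $D$ for which $C_1n^D\leq|B_e(n)|\leq C_2n^D$ for all $n\ge1$ and some $C_1,C_2>0$; moreover $\lim_{n\to\infty}|B_e(n)|/n^D$ exists and is a finite positive constant. *)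

(* Defs.v *)
From HB Require Import structures.
From mathcomp Require Import all_boot all_order all_algebra.
From mathcomp Require Import all_classical all_reals all_analysis.
Set Implicit Arguments. Unset Strict Implicit. Unset Printing Implicit Defensive.
Import Order.TTheory GRing.Theory Num.Theory.
Local Open Scope ring_scope.

Definition is_group (G : Type) (mul : G -> G -> G) (inv : G -> G) (one : G) :=
  [/\ (forall x y z, mul x (mul y z) = mul (mul x y) z),
      (forall x, mul one x = x),
      (forall x, mul x one = x),
      (forall x, mul (inv x) x = one) &
      (forall x, mul x (inv x) = one)].

Definition wprod (G : Type) (mul : G -> G -> G) (one : G) (w : seq G) : G :=
  foldr mul one w.

Definition symmetric_gen (G : eqType) (mul : G -> G -> G) (inv : G -> G)
    (one : G) (S : seq G) :=
  (forall s, s \in S -> inv s \in S) /\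
  (forall x : G, exists w : seq G, all (mem S) w /\ x = wprod mul one w).

(* Word metric: d^S(x,p) <= t  iff  x = p s_1 ... s_k with s_i in S and k <= t
   (a path of length k in the Cayley graph, where x ~ y iff x = y s). *)
Definition in_ball (R : realType) (G : eqType) (mul : G -> G -> G) (one : G)
    (S : seq G) (p : G) (t : R) (x : G) : Prop :=
  exists w : seq G, [/\ all (mem S) w, (size w)%:R <= t & x = mul p (wprod mul one w)].

Fixpoint words (G : Type) (S : seq G) (k : nat) : seq (seq G) :=
  if k is k'.+1 then [seq s :: w | s <- S, w <- words S k'] else [:: [::]].

Definition ball_list (R : realType) (G : eqType) (mul : G -> G -> G) (one : G)
    (S : seq G) (p : G) (t : R) : seq G :=
  if t < 0 then [::] else
  undup [seq mul p (wprod mul one w) | k <- iota 0 (Num.truncn t).+1, w <- words S k].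

Definition ball_card (R : realType) (G : eqType) (mul : G -> G -> G) (one : G)
    (S : seq G) (p : G) (t : R) : nat :=
  size (ball_list mul one S p t).

Lemma ball_list_uniq (R : realType) (G : eqType) mul one (S : seq G) p (t : R) :
  uniq (ball_list mul one S p t).
Proof. by rewrite /ball_list; case: ifP => // _; exact: undup_uniq. Qed.

Lemma words_spec (G : eqType) (S : seq G) k w :
  (w \in words S k) = (all (mem S) w && (size w == k)).
Proof.
elim: k w => [|k IH] w /=.
  by rewrite mem_seq1 -size_eq0; case: w => [|s w] //=; rewrite andbF.
apply/allpairsPdep/idP.
  by case=> a [b [aS /[!IH] /andP[bS /eqP bk] ->]]; rewrite /= aS bS bk eqxx.
case: w => [|s w] //= /andP[/andP[sS wS] /eqP [sz]].
by exists s, w; split => //; rewrite IH wS sz eqxx.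
Qed.

Lemma mem_ball_list (R : realType) (G : eqType) mul one (S : seq G) p (t : R) x :
  x \in ball_list mul one S p t <-> in_ball mul one S p t x.
Proof.
rewrite /ball_list /in_ball; case: ifPn => [t0|].
  split => //; case=> w [_ le _].
  by have := lt_le_trans t0 (le_trans (ler0n _ _) le); rewrite ltxx.
rewrite -leNgt => t0; rewrite mem_undup; split.
  case/allpairsPdep=> k [w [kin /[!words_spec] /andP[wS /eqP sz] ->]].
  exists w; split => //; rewrite sz.
  by move: kin; rewrite mem_iota add0n ltnS truncn_ge_nat.
case=> w [wS le ->]; apply/allpairsPdep; exists (size w), w; split => //.
  rewrite mem_iota add0n ltnS /=.
  by rewrite truncn_ge_nat.
by rewrite words_spec wS eqxx.
Qed.

Definition poly_growth (R : realType) (G : eqType) (mul : G -> G -> G)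
    (one : G) (S : seq G) : Prop :=
  exists C A : R, [/\ 0 < C, 0 < A &
    forall n : nat, (1 <= n)%N ->
      (ball_card mul one S one (n%:R : R))%:R <= C * (n%:R `^ A)].

Definition homogeneous_dim (R : realType) (G : eqType) (mul : G -> G -> G)
    (one : G) (S : seq G) (D : nat) : Prop :=
  exists C1 C2 : R, [/\ 0 < C1, 0 < C2 &
    forall n : nat, (1 <= n)%N ->
      C1 * n%:R ^+ D <= (ball_card mul one S one (n%:R : R))%:R /\
      (ball_card mul one S one (n%:R : R))%:R <= C2 * n%:R ^+ D].

(* Main.v *)
Require Import Defs.
From HB Require Import structures.
From mathcomp Require Import all_boot all_order all_algebra.
From mathcomp Require Import all_classical all_reals all_analysis.
From mathcomp Require Import lra zify ring.
Import Order.TTheory GRing.Theory Num.Theory numFieldNormedType.Exports.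
Local Open Scope ring_scope.
Local Open Scope classical_set_scope.

Lemma card_transl (R : realType) (G : eqType) (mul : G -> G -> G)
    (inv : G -> G) (one : G) (S : seq G) p (t : R) :
  is_group mul inv one ->
  ball_card mul one S p t = ball_card mul one S one t.
Proof.
case=> mA m1x _ mVx _.
have inj : injective (mul p).
  move=> x y /(congr1 (mul (inv p))).
  by rewrite !mA mVx !m1x.
rewrite /ball_card /ball_list; case: ifP => // _.
set l := iota _ _.
have -> : [seq mul p (wprod mul one w) | k <- l, w <- words S k] =
  map (mul p) [seq mul one (wprod mul one w) | k <- l, w <- words S k].
  elim: l => //= k l IH; rewrite map_cat IH -map_comp; congr (_ ++ _).
  by apply: eq_map => w /=; rewrite m1x.
by rewrite undup_map_inj // size_map.
Qed.

Lemma card_trunc (R : realType) (G : eqType) (mul : G -> G -> G)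
    (one : G) (S : seq G) p (t : R) : 0 <= t ->
  ball_card mul one S p t = ball_card mul one S p ((Num.truncn t)%:R : R).
Proof.
move=> t0; rewrite /ball_card /ball_list natrK ltNge t0 /=.
by rewrite ltNge ler0n.
Qed.

Lemma bern (R : realType) (x : R) n : 0 <= x <= 1 -> 1 - n%:R * x <= (1-x)^+n.
Proof.
case/andP=> x0 x1; elim: n => [|n IH]; first by rewrite mul0r subr0 expr0.
rewrite exprS -natr1.
have h : 0 <= 1 - x by rewrite subr_ge0.
have := ler_wpM2l h IH.
have := mulr_ge0 x0 (ler0n R n).
move=> a b; apply: le_trans b; nra.
Qed.

Theorem lemma2p1 (R : realType) (G : eqType) (mul : G -> G -> G)
    (inv : G -> G) (one : G) (S : seq G) (D : nat) :
  is_group mul inv one ->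
  symmetric_gen mul inv one S ->
  poly_growth R mul one S ->
  homogeneous_dim R mul one S D ->
  (exists c : R, 0 < c /\
     (fun n : nat => (ball_card mul one S one (n%:R : R))%:R / n%:R ^+ D)
       @ \oo --> c) ->
  forall theta : R, 0 < theta ->
  exists R0 : R, forall (p : G) (r Rr : R), R0 <= r -> r <= Rr ->
    (ball_card mul one S p Rr)%:R / (ball_card mul one S p r)%:R
      <= (1 + theta) * (Rr / r) ^+ D.
Proof.
move=> Hg _ _ _ [c [c0 Hc]] theta th0.
set eta := theta / (3 + 2 * theta).
have h3 : 0 < 3 + 2 * theta by lra.
have eta0 : 0 < eta by rewrite divr_gt0.
have etaE : eta * (3 + 2 * theta) = theta by rewrite divfK // gt_eqF.
have eta1 : eta < 1 by nra.
clearbody eta.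
have ce0 : 0 < c * eta by rewrite mulr_gt0.
have := cvgr_dist_lt _ _ Hc _ ce0.
case=> N _ HN.
set b := fun n : nat => (ball_card mul one S one (n%:R : R))%:R : R.
have bnd n : (N.+1 <= n)%N ->
    (c - c * eta) * n%:R ^+ D <= b n /\ b n <= (c + c * eta) * n%:R ^+ D.
  move=> Nn; have /HN : (N <= n)%N by lia.
  rewrite /= => H.
  have nD : 0 < n%:R ^+ D :> R by rewrite exprn_gt0 // ltr0n; lia.
  move: H; rewrite ltr_norml => /andP[H1 H2].
  have : c - c * eta <= b n / n%:R ^+ D by rewrite /b; lra.
  have : b n / n%:R ^+ D <= c + c * eta by rewrite /b; lra.
  by rewrite ler_pdivrMr // ler_pdivlMr.
exists (N.+1%:R + 1 + D%:R / eta) => p r Rr hr hrR.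
have Deta : 0 <= D%:R / eta by rewrite divr_ge0 // ltW.
have r1 : 1 <= r by have := ler0n R N.+1; lra.
have r0 : 0 < r by lra.
have Rr0 : 0 < Rr by lra.
rewrite !(card_transl _ _ _ _ _ _ _ _ Hg) (card_trunc _ _ _ _ _ _ _ (ltW r0))
  (card_trunc _ _ _ _ _ _ _ (ltW Rr0)).
set n := Num.truncn r; set M := Num.truncn Rr.
have Nn : (N.+1 <= n)%N by rewrite truncn_ge_nat ?(ltW r0) //; lra.
have NM : (N.+1 <= M)%N by rewrite truncn_ge_nat ?(ltW Rr0) //; lra.
have [bn1 _] := bnd _ Nn.
have [_ bM2] := bnd _ NM.
rewrite -/(b n) -/(b M) in bn1 bM2 *.
have nr : r - 1 <= n%:R by have := truncnS_gt r; rewrite -natr1 -/n; lra.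
have Mr : M%:R <= Rr by rewrite truncn_le ltW.
have MD : (M%:R ^+ D) <= Rr ^+ D by apply: lerXn2r; rewrite ?nnegrE ?ler0n // ltW.
have nD : (r - 1) ^+ D <= n%:R ^+ D by apply: lerXn2r; rewrite ?nnegrE ?ler0n //; lra.
have ir : 0 <= r^-1 <= 1.
  by rewrite invr_ge0 ltW //= invf_le1.
have := @bern _ _ D ir.
have rE : r - 1 = r * (1 - r^-1) by rewrite mulrBr divff ?gt_eqF // mulr1.
rewrite rE exprMn in nD.
have Dr : D%:R * r^-1 <= eta.
  rewrite ler_pdivrMr // -ler_pdivrMl //.
  by have := ler0n R N.+1; lra.
have Dr0 : 0 <= D%:R * r^-1 by rewrite mulr_ge0 // invr_ge0 ltW.
have rD : 0 < r ^+ D by rewrite exprn_gt0.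
have RD : 0 < Rr ^+ D by rewrite exprn_gt0.
move=> Hb.
have s0 : (1 - eta) * (1 - eta) <= (1 - eta) * (1 - D%:R * r^-1).
  by apply: ler_wpM2l; lra.
have s1 : 1 + eta <= (1 + theta) * ((1 - eta) * (1 - D%:R * r^-1)).
  have th1 : 0 <= 1 + theta by have := ltW th0; lra.
  have := ler_wpM2l th1 s0; apply: le_trans.
  have e : (1 + theta) * ((1 - eta) * (1 - eta)) =
    1 + eta + (1 + theta) * (eta * eta) + (theta - eta * (3 + 2 * theta)) by ring.
  rewrite e etaE subrr addr0 lerDl; apply: mulr_ge0; last by rewrite mulr_ge0 // ltW.
  by have := ltW th0; lra.
have scal : c + c * eta <= (1 + theta) * (c - c * eta) * (1 - D%:R * r^-1).
  have -> : (1 + theta) * (c - c * eta) * (1 - D%:R * r^-1) =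
     c * ((1 + theta) * ((1 - eta) * (1 - D%:R * r^-1))) by ring.
  have -> : c + c * eta = c * (1 + eta) by ring.
  by rewrite ler_wpM2l // ltW.
have cp : 0 <= c + c * eta by rewrite addr_ge0 // ltW.
have cm : 0 <= c - c * eta.
  have -> : c - c * eta = c * (1 - eta) by ring.
  by rewrite mulr_ge0 // ?subr_ge0 ltW.
have A0 : 0 <= (1 + theta) * (c - c * eta) by rewrite mulr_ge0 // addr_ge0 // ltW.
have key : (c + c * eta) * r ^+ D <= (1 + theta) * b n.
  have k1 := ler_wpM2r (ltW rD) scal.
  apply: (le_trans k1).
  have k2 : (1 - D%:R * r^-1) * r ^+ D <= r ^+ D * (1 - r^-1) ^+ D.
    by rewrite mulrC ler_wpM2l // ltW.
  have k3 := le_trans k2 nD.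
  have k4 := ler_wpM2l A0 k3.
  rewrite -[X in X <= _](mulrA ((1 + theta) * (c - c * eta))).
  apply: (le_trans k4).
  by rewrite -mulrA ler_wpM2l // addr_ge0 // ltW.
have bn0 : 0 < b n.
  apply: lt_le_trans bn1; apply: mulr_gt0.
    have -> : c - c * eta = c * (1 - eta) by ring.
    by rewrite mulr_gt0 // subr_gt0.
  by rewrite exprn_gt0 // ltr0n (leq_ltn_trans (leq0n N) Nn).
rewrite (ler_pdivrMr _ _ bn0) expr_div_n.
apply: (le_trans bM2).
apply: (le_trans (ler_wpM2l cp MD)).
have e : (c + c * eta) * Rr ^+ D = Rr ^+ D / r ^+ D * ((c + c * eta) * r ^+ D).
  by rewrite [in RHS](mulrC (c + c * eta)) mulrA divfK ?gt_eqF // mulrC.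
rewrite e.
have q0 : 0 <= Rr ^+ D / r ^+ D by rewrite divr_ge0 // ltW.
apply: (le_trans (ler_wpM2l q0 key)).
by rewrite mulrCA mulrA.
Qed.
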